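(* Suppose $C(X)_\mathcal{P}$ contains the characteristic function $\chi_{\{x\}}$ for every $x\in X$. Then: (1) every free ideal and every essential ideal of $C(X)_\mathcal{P}$ has depth zero; (2) every maximal ideal of $C(X)_\mathcal{P}$ has depth zero; (3) every prime ideal of $C(X)_\mathcal{P}$ has depth zero.
   Context: Let $(X,\tau)$ be a $T_1$ topological space and $\mathcal{P}$ an ideal of closed subsets of $X$ (a nonempty family of closed sets closed under finite unions and under taking closed subsets). For $f\colon X\to\mathbb{R}$, $D_f$ denotes the set of points of discontinuity of $f$, and $C(X)_\mathcal{P}=\{f\colon X\to\mathbb{R} : \overline{D_f}\in\mathcal{P}\}$, a commutative ring with unity under pointwise operations. For $f\in C(X)_\mathcal{P}$, $Z_\mathcal{P}(f)=\{x: f(x)=0\}$; an ideal $I$ is free if $\bigcap\{Z_\mathcal{P}(f): f\in I\}=\emptyset$. An ideal is essential if it intersects every nonzero ideal nontrivially. For an ideal $I$ regarded as a $C(X)_\mathcal{P}$-module $M$, an element $a$ is $M$-regular if $am\neq 0$ for all $m\in M\setminus\{0\}$; a sequence $a_1,\dots,a_n$ is $I$-regular if $a_1$ is $I$-regular, each $a_k$ is $I/(a_1I+\dots+a_{k-1}I)$-regular, and $a_1I+\dots+a_nI\neq I$; the depth of $I$ is the length of a maximal $I$-regular sequence. *)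

(* Defs.v *)
From HB Require Import structures.
From mathcomp Require Import all_boot all_order all_algebra.
From mathcomp Require Import all_classical all_reals all_analysis.
Set Implicit Arguments. Unset Strict Implicit. Unset Printing Implicit Defensive.
Import Order.TTheory GRing.Theory Num.Theory.
Import numFieldNormedType.Exports.
Local Open Scope classical_set_scope.
Local Open Scope ring_scope.

Section CP.
Variables (X : topologicalType) (R : realType).

Definition closed_ideal (P : set (set X)) : Prop :=
  [/\ P !=set0,
      (forall A, P A -> closed A),
      (forall A B, P A -> P B -> P (A `|` B)) &
      (forall A B, P A -> closed B -> B `<=` A -> P B)].

Definition discont (f : X -> R) : set X := [set x | ~ {for x, continuous f}].

Definition CP (P : set (set X)) (f : X -> R) : Prop := P (closure (discont f)).

Definition zero_fun : X -> R := fun _ => 0.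

Definition is_ideal (P : set (set X)) (I : set (X -> R)) : Prop :=
  [/\ I `<=` CP P,
      I zero_fun,
      (forall f g, I f -> I g -> I (f \+ g)) &
      (forall f g, CP P f -> I g -> I (f \* g))].

Definition ZP (f : X -> R) : set X := [set x | f x = 0].

Definition free_ideal (P : set (set X)) (I : set (X -> R)) : Prop :=
  is_ideal P I /\ \bigcap_(f in I) ZP f = set0.

Definition essential_ideal (P : set (set X)) (I : set (X -> R)) : Prop :=
  is_ideal P I /\
  forall J, is_ideal P J -> J != [set zero_fun] ->
    exists f, [/\ I f, J f & f != zero_fun].

Definition maximal_ideal (P : set (set X)) (I : set (X -> R)) : Prop :=
  [/\ is_ideal P I, I != CP P &
      forall J, is_ideal P J -> I `<=` J -> J = I \/ J = CP P].

Definition prime_ideal (P : set (set X)) (I : set (X -> R)) : Prop :=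
  [/\ is_ideal P I, I != CP P &
      forall f g, CP P f -> CP P g -> I (f \* g) -> I f \/ I g].

(* a_1 I + ... + a_n I, as a subset of I *)
Fixpoint sum_mult (I : set (X -> R)) (s : seq (X -> R)) : set (X -> R) :=
  match s with
  | [::] => [set zero_fun]
  | a :: s' => [set h | exists m, exists y,
                 [/\ I m, sum_mult I s' y & h = (a \* m) \+ y]]
  end.

Definition quot_regular (I J : set (X -> R)) (a : X -> R) : Prop :=
  forall m, I m -> ~ J m -> ~ J (a \* m).

Definition regular_seq (P : set (set X)) (I : set (X -> R)) (s : seq (X -> R))
  : Prop :=
  (forall k, (k < size s)%N -> CP P (nth zero_fun s k)) /\
  (forall k, (k < size s)%N ->
     quot_regular I (sum_mult I (take k s)) (nth zero_fun s k)) /\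
  sum_mult I s != I.

(* depth of I is zero: every I-regular sequence is empty
   (so the empty sequence is the (unique) maximal one) *)
Definition depth_zero (P : set (set X)) (I : set (X -> R)) : Prop :=
  forall s, regular_seq P I s -> s = [::].

End CP.

(* Main.v *)
Require Import Defs.
From HB Require Import structures.
From mathcomp Require Import all_boot all_order all_algebra.
From mathcomp Require Import all_classical all_reals all_analysis.
Set Implicit Arguments. Unset Strict Implicit. Unset Printing Implicit Defensive.
Import Order.TTheory GRing.Theory Num.Theory.
Import numFieldNormedType.Exports.
Local Open Scope classical_set_scope.
Local Open Scope ring_scope.

Section S.
Variables (X : topologicalType) (R : realType) (P : set (set X)).
Hypothesis hP : closed_ideal P.

Lemma P0 : P set0.
Proof. by case: hP => -[A PA] cl _ sub; apply: (sub A) => //; exact: closed0. Qed.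

Lemma P_sub A B : P A -> B `<=` closure A -> P (closure B).
Proof.
case: hP => _ cl _ sub PA BA; apply: (sub A) => //; first exact: closed_closure.
have eA := (closure_id A).1 (cl _ PA).
by rewrite -eA in BA; rewrite [X in _ `<=` X]eA; apply: closureS.
Qed.

Lemma P_U2 (f g : X -> R) (h : X -> R) : CP P f -> CP P g ->
  discont h `<=` discont f `|` discont g -> CP P h.
Proof.
move=> Pf Pg hs; rewrite /CP.
case: hP => _ cl U sub.
apply: (sub _ _ (U _ _ Pf Pg)); first exact: closed_closure.
by rewrite -closureU; apply: closureS.
Qed.

Lemma CP_cst (c : R) : CP P (fun _ : X => c).
Proof.
rewrite /CP (_ : discont _ = set0) ?closure0; first exact: P0.
by rewrite -subset0 => x /= []; exact: cvg_cst.
Qed.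

Lemma CP_add (f g : X -> R) : CP P f -> CP P g -> CP P (f \+ g).
Proof.
move=> Pf Pg; apply: (P_U2 Pf Pg) => x /= H.
apply: contrapT => /not_orP[/contrapT cf /contrapT cg]; apply: H.
exact: (continuousD cf cg).
Qed.

Lemma CP_mul (f g : X -> R) : CP P f -> CP P g -> CP P (f \* g).
Proof.
move=> Pf Pg; apply: (P_U2 Pf Pg); move=> x /= H.
apply: contrapT => /not_orP[/contrapT cf /contrapT cg]; apply: H.
exact: (continuousM cf cg).
Qed.

Definition chi (x : X) : X -> R := \1_[set x].

Lemma chiE x z : chi x z = if z == x then 1 else 0.
Proof. by rewrite /chi indicE in_set1; case: (z == x). Qed.

Lemma iso_cont (y : X) (f : X -> R) : {for y, continuous (chi y)} ->
  {for y, continuous f}.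
Proof.
move=> /cvgrPdist_lt /(_ 1 ltr01) H.
apply: cvg_near_cst; apply: filterS H => z.
rewrite !chiE eqxx; case: eqVneq => [->//|_].
by rewrite subr0 normr1 ltxx.
Qed.


Notation z0 := (@zero_fun X R).
Lemma P_U2s (A B : set X) (h : X -> R) : P (closure A) -> P (closure B) ->
  discont h `<=` A `|` B -> CP P h.
Proof.
move=> Pf Pg hs; rewrite /CP.
case: hP => _ cl U sub.
apply: (sub _ _ (U _ _ Pf Pg)); first exact: closed_closure.
by rewrite -closureU; apply: closureS.
Qed.

Lemma CP_inv (a : X -> R) : CP P a ->
  P (closure (\bigcup_(y in ZP a) discont (chi y))) ->
  CP P (fun z => (a z)^-1).
Proof.
move=> Pa PB; apply: (P_U2s Pa PB) => x /= H.
apply: contrapT => /not_orP[/contrapT ca nB]; apply: H.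
have [a0|an0] := eqVneq (a x) 0.
  apply: iso_cont; apply: contrapT => dc; apply: nB; exists x => //.
exact: continuousV.
Qed.

Lemma divB (I : set (X -> R)) (a : X -> R) : is_ideal P I -> CP P a ->
  P (closure (\bigcup_(y in ZP a) discont (chi y))) ->
  (forall f, I f -> forall y, a y = 0 -> f y = 0) ->
  forall f, I f -> exists g, I g /\ f = a \* g.
Proof.
move=> [_ _ _ hm] Pa PB hz f If.
exists ((fun z => (a z)^-1) \* f); split; first by apply: hm => //; exact: CP_inv.
apply/funext => y /=; have [a0|an0] := eqVneq (a y) 0.
  by rewrite a0 mul0r (hz f If y a0).
by rewrite mulrA mulrV ?mul1r // unitfE.
Qed.

Lemma sum_mult_sub (I : set (X -> R)) s : is_ideal P I ->
  (forall k, (k < size s)%N -> CP P (nth z0 s k)) ->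
  sum_mult I s `<=` I.
Proof.
move=> hI; case: (hI) => _ I0 ha hm.
elim: s => [|b s IH] hs f /=; first by move=> ->.
move=> [m [y [Im sy ->]]]; apply: ha; first by apply: hm => //; exact: (hs 0%N).
by apply: IH sy => k hk; exact: (hs k.+1).
Qed.

Lemma zero_sum (I : set (X -> R)) s : I z0 -> sum_mult I s z0.
Proof.
move=> I0; elim: s => [|b s IH] //=; exists z0, z0; split => //.
by apply/funext => y; rewrite /= /zero_fun mulr0 addr0.
Qed.

Lemma depth_tool (I : set (X -> R)) : is_ideal P I ->
  (forall a, CP P a -> (exists m, [/\ I m, m <> z0 & a \* m = z0])
     \/ (forall f, I f -> exists g, I g /\ f = a \* g)) -> depth_zero P I.
Proof.
move=> hI H [|a s] // [hc [hr hne]]; exfalso.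
have Ca := hc 0%N erefl; have ra := hr 0%N erefl; rewrite /= in Ca ra.
case: (H a Ca) => [[m [Im mn am]]|hB].
  by apply: (ra m Im mn); rewrite /= am.
move/eqP: hne; apply; apply/seteqP; split.
  apply: sum_mult_sub => //.
move=> f If; have [g [Ig ->]] := hB f If.
exists g, z0; split => //; first by apply: zero_sum; case: hI.
by apply/funext => y; rewrite /= /zero_fun addr0.
Qed.


Hypothesis hchi : forall x, CP P (chi x).

Lemma chi_nz x : chi x <> z0.
Proof. by move/(congr1 (fun f => f x)); rewrite chiE eqxx /zero_fun => /eqP; rewrite oner_eq0. Qed.

Lemma noZ (I : set (X -> R)) a : is_ideal P I -> CP P a -> (forall y, a y <> 0) ->
  forall f, I f -> exists g, I g /\ f = a \* g.
Proof.
move=> hI Pa na; apply: divB => //.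
  apply: (@P_sub set0); first exact: P0.
  by move=> y [z /= az]; have := na z.
by move=> f _ y /na.
Qed.

Lemma Mx_case (I : set (X -> R)) x : is_ideal P I ->
  (forall f, I f <-> CP P f /\ f x = 0) ->
  forall a, CP P a -> (exists m, [/\ I m, m <> z0 & a \* m = z0])
     \/ (forall f, I f -> exists g, I g /\ f = a \* g).
Proof.
move=> hI hIx a Pa.
case: (pselect (exists y, y != x /\ a y = 0)) => [[y [yx ay]]|ny].
  left; exists (chi y); split; first by apply/hIx; split => //; rewrite chiE eq_sym (negbTE yx).
    exact: chi_nz.
  apply/funext => z; rewrite /= chiE /zero_fun; case: eqVneq => [->|]; first by rewrite ay mul0r.
  by rewrite mulr0.
have zx y : a y = 0 -> y = x.
  by move=> ay; apply: contrapT => yx; apply: ny; exists y; split => //; apply/eqP.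
right; apply: divB => //.
  apply: (@P_sub (closure (discont (chi x)))); first exact: hchi.
  move=> y [z /= /zx -> dz]; do 2 apply: subset_closure; exact: dz.
by move=> f /hIx [_ fx] y /zx ->.
Qed.

Lemma free_case (I : set (X -> R)) : is_ideal P I -> \bigcap_(f in I) ZP f = set0 ->
  depth_zero P I.
Proof.
move=> hI hfree; apply: depth_tool => // a Pa.
case: (pselect (exists y, a y = 0)) => [[y ay]|na]; last first.
  by right; apply: noZ => // y ay; apply: na; exists y.
left.
have [f [If fy]] : exists f, I f /\ f y <> 0.
  apply: contrapT => hn.
  have : (\bigcap_(f in I) ZP f) y.
    by move=> f If /=; apply: contrapT => fy; apply: hn; exists f.
  by rewrite hfree.
exists (chi y \* f); split.
- by case: hI => _ _ _ hm; apply: hm.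
- by move/(congr1 (fun g => g y)); rewrite /= chiE eqxx mul1r /zero_fun.
- apply/funext => z; rewrite /= chiE /zero_fun; case: eqVneq => [->|]; first by rewrite ay mul0r.
  by rewrite mul0r mulr0.
Qed.

Lemma Mx_ideal x : is_ideal P [set g : X -> R | CP P g /\ g x = 0].
Proof.
split.
- by move=> g [].
- by split; [exact: CP_cst|].
- by move=> f g [Pf fx] [Pg gx]; split; [exact: CP_add|rewrite /= fx gx addr0].
- by move=> f g Pf [Pg gx]; split; [exact: CP_mul|rewrite /= gx mulr0].
Qed.


Lemma ess_case (I : set (X -> R)) : essential_ideal P I -> depth_zero P I.
Proof.
move=> [hI hess]; apply: depth_tool => // a Pa.
case: (pselect (exists y, a y = 0)) => [[y ay]|na]; last first.
  by right; apply: noZ => // y ay; apply: na; exists y.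
left.
pose J := [set g : X -> R | CP P g /\ forall z, z != y -> g z = 0].
have hJ : is_ideal P J.
  split.
  - by move=> g [].
  - by split; [exact: CP_cst|].
  - move=> f g [Pf fx] [Pg gx]; split; first exact: CP_add.
    by move=> z zy; rewrite /= fx ?gx ?addr0.
  - move=> f g Pf [Pg gx]; split; first exact: CP_mul.
    by move=> z zy; rewrite /= gx ?mulr0.
have hJ0 : J != [set z0].
  apply/eqP => eJ.
  have : J (chi y).
    by split => // z zy; rewrite chiE (negbTE zy).
  by rewrite eJ => /= /chi_nz.
have [f [If [_ Jf] fn]] := hess J hJ hJ0.
exists f; split => //; first by move/eqP: fn.
apply/funext => z; rewrite /= /zero_fun; case: (eqVneq z y) => [->|zy].
  by rewrite ay mul0r.
by rewrite Jf ?mulr0.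
Qed.

Lemma max_case (I : set (X -> R)) : maximal_ideal P I -> depth_zero P I.
Proof.
move=> [hI hne hmax].
case: (pselect (\bigcap_(f in I) ZP f = set0)) => [hf|]; first exact: free_case.
move/eqP/set0P => [x hx].
have IM : I `<=` [set g : X -> R | CP P g /\ g x = 0].
  by move=> f If; split; [case: hI => + _ _ _; apply|exact: hx].
case: (hmax _ (Mx_ideal x) IM) => eM.
  apply: depth_tool => //; apply: (@Mx_case I x) => // f.
  by rewrite -eM.
exfalso; have : CP P (chi x) by [].
by rewrite -eM => -[_]; rewrite chiE eqxx => /eqP; rewrite oner_eq0.
Qed.

Lemma prime_case (I : set (X -> R)) : prime_ideal P I -> depth_zero P I.
Proof.
move=> [hI hne hpr]; apply: depth_tool => // a Pa.
case: (pselect (exists y, a y = 0)) => [[y ay]|na]; last first.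
  by right; apply: noZ => // y ay; apply: na; exists y.
case: (pselect (I (chi y))) => [Iy|nIy].
  left; exists (chi y); split => //; first exact: chi_nz.
  apply/funext => z; rewrite /= chiE /zero_fun; case: eqVneq => [->|]; first by rewrite ay mul0r.
  by rewrite mulr0.
apply: (@Mx_case I y) => // f; split.
  move=> If; split; first by case: hI => + _ _ _; apply.
  apply: contrapT => fy; apply: nIy.
  have -> : chi y = (fun _ => (f y)^-1) \* (chi y \* f).
    apply/funext => z; rewrite /= chiE; case: eqVneq => [->|]; last by rewrite !mul0r mulr0.
    by rewrite mul1r mulVr // unitfE; apply/eqP.
  case: hI => _ _ _ hm; apply: (hm); first exact: CP_cst.
  by apply: hm => //; apply: hchi.
move=> [Pf fy].
have : I (f \* chi y).
  have -> : f \* chi y = z0.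
    apply/funext => z; rewrite /= chiE /zero_fun; case: eqVneq => [->|]; first by rewrite fy mul0r.
    by rewrite mulr0.
  by case: hI.
by case/(hpr _ _ Pf (hchi y)).
Qed.

End S.

Theorem theorem4p6 (X : topologicalType) (R : realType) (P : set (set X)) :
  accessible_space X ->
  closed_ideal P ->
  (forall x : X, @CP X R P (\1_[set x] : X -> R)) ->
  [/\ (forall I : set (X -> R),
         (free_ideal P I \/ essential_ideal P I) -> depth_zero P I),
      (forall I : set (X -> R), maximal_ideal P I -> depth_zero P I) &
      (forall I : set (X -> R), prime_ideal P I -> depth_zero P I)].
Proof.
move=> _ hP hchi; split.
- move=> I [[hI hf]|he]; first exact: (free_case hP).
  exact: (ess_case hP hchi).
- by move=> I; apply: (max_case hP hchi).
- by move=> I; apply: (prime_case hP hchi).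
Qed.
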